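(* Let $\mathcal H$ be a connected $As^c$-$Mag$-bialgebra and define $e:\bar{\mathcal H}\to\bar{\mathcal H}$ by $e=\mathrm{id}+\sum_{n\ge1}(-1)^n\omega^{n+1}\circ\delta^n$. Then: (i) $e(\omega_r^n(x_1,\dots,x_n))=0$ for all $n\ge2$ and all $x_1,\dots,x_n\in\mathrm{Prim}\,\mathcal H$; (ii) $\delta\circ e=0$; (iii) the restriction of $e$ to $\mathrm{Prim}\,\mathcal H$ is the identity.
   Context: An $As^c$-$Mag$-bialgebra is a vector space $\mathcal H$ over a field with a bilinear product $\cdot$ (not assumed associative) with two-sided unit $1$ and a coassociative counital coproduct $\Delta$ with $\Delta(1)=1\otimes1$ and $\Delta(x\cdot y)=\Delta(x)\cdot(1\otimes y)+(x\otimes1)\cdot\Delta(y)-x\otimes y$, the product on $\mathcal H\otimes\mathcal H$ being componentwise. $\bar{\mathcal H}$ = kernel of the counit; reduced coproduct $\delta(x)=\Delta(x)-x\otimes1-1\otimes x$ on $\bar{\mathcal H}$; $\delta^1=\delta$, $\delta^n=(\delta\otimes\mathrm{id}^{\otimes(n-1)})\circ\delta^{n-1}:\bar{\mathcal H}\to\bar{\mathcal H}^{\otimes(n+1)}$; $\mathrm{Prim}\,\mathcal H=\ker\delta$. Connected means: for each $x\in\bar{\mathcal H}$, $\delta^n(x)=0$ for $n$ large, so the sum defining $e$ is finite. $\omega^{m}$ is the left comb $\omega^1(x)=x$, $\omega^m(x_1,\dots,x_m)=\omega^{m-1}(x_1,\dots,x_{m-1})\cdot x_m$, applied to the tensor factors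 ($\omega^{n+1}\circ\delta^n$ means applying $\omega^{n+1}$ to $\delta^n(x)\in\bar{\mathcal H}^{\otimes(n+1)}$). $\omega_r^m$ is the right comb $\omega_r^1(x)=x$, $\omega_r^m(x_1,\dots,x_m)=x_1\cdot\omega_r^{m-1}(x_2,\dots,x_m)$. *)

(* Defs.v *)
From HB Require Import structures.
From mathcomp Require Import all_boot all_order all_algebra.
From Stdlib Require Import ClassicalEpsilon.
Set Implicit Arguments. Unset Strict Implicit. Unset Printing Implicit Defensive.
Import GRing.Theory.
Local Open Scope ring_scope.

Section AsMag.
Variables (K : fieldType) (H : lmodType K).

(* Elements of the tensor algebra T(H) = (+)_m H^{(x)m}, represented by finite
   formal combinations of pure tensors: (c, [:: h1; ...; hm]) stands for
   c (h1 (x) ... (x) hm). *)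
Definition tens := seq (K * seq H).

Definition multilinear (W : lmodType K) (f : seq H -> W) : Prop :=
  forall (l1 l2 : seq H) (a : K) (x y : H),
    f (l1 ++ (a *: x + y) :: l2) = a *: f (l1 ++ x :: l2) + f (l1 ++ y :: l2).

Definition tens_eval (W : lmodType K) (f : seq H -> W) (s : tens) : W :=
  \sum_(p <- s) p.1 *: f p.2.

(* Equality in the tensor product (universal property: two formal combinations
   are equal as tensors iff every multilinear map takes the same value). *)
Definition teq (s t : tens) : Prop :=
  forall (W : lmodType K) (f : seq H -> W), multilinear f ->
    tens_eval f s = tens_eval f t.

Definition tscale (a : K) (s : tens) : tens := [seq (a * p.1, p.2) | p <- s].

Definition tens2 (s : seq (H * H)) : tens := [seq (1, [:: p.1; p.2]) | p <- s].

Variables (mul : H -> H -> H) (one : H) (eps : H -> K) (Delta : H -> seq (H * H)).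

Definition is_AsMag_bialgebra : Prop :=
      (forall a x y z, mul (a *: x + y) z = a *: mul x z + mul y z) /\
      (forall a x y z, mul z (a *: x + y) = a *: mul z x + mul z y) /\
      (forall x, mul one x = x /\ mul x one = x) /\
      (forall a x y, eps (a *: x + y) = a * eps x + eps y) /\
      (forall a x y, teq (tens2 (Delta (a *: x + y)))
                         (tscale a (tens2 (Delta x)) ++ tens2 (Delta y))) /\
      (* coassociativity: (Delta (x) id) Delta = (id (x) Delta) Delta *)
      (forall x, teq [seq (1, [:: q.1; q.2; p.2]) | p <- Delta x, q <- Delta p.1]
                     [seq (1, [:: p.1; q.1; q.2]) | p <- Delta x, q <- Delta p.2]) /\
      (forall x, \sum_(p <- Delta x) eps p.1 *: p.2 = x /\
                 \sum_(p <- Delta x) eps p.2 *: p.1 = x) /\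
      teq (tens2 (Delta one)) (tens2 [:: (one, one)]) /\
      (* Delta (x y) = Delta(x).(1 (x) y) + (x (x) 1).Delta(y) - x (x) y *)
      (forall x y, teq (tens2 (Delta (mul x y)))
         ([seq (1, [:: mul p.1 one; mul p.2 y]) | p <- Delta x] ++
          [seq (1, [:: mul x p.1; mul one p.2]) | p <- Delta y] ++
          [:: (-1, [:: x; y])])).

Definition delta (x : H) : tens :=
  tens2 (Delta x) ++ [:: (-1, [:: x; one]); (-1, [:: one; x])].

(* delta (x) id^{(x)(m-1)} applied to a tensor *)
Definition delta_first (s : tens) : tens :=
  flatten [seq [seq (p.1 * q.1, q.2 ++ behead p.2) | q <- delta (head 0 p.2)]
          | p <- s].

Fixpoint deltan (n : nat) (x : H) : tens :=
  if n is n'.+1 then delta_first (deltan n' x) else [:: (1, [:: x])].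

Definition barH (x : H) : Prop := eps x = 0.

Definition Prim (x : H) : Prop := barH x /\ teq (delta x) [::].

Definition connected : Prop :=
  forall x, barH x -> exists N, forall n, (N <= n)%N -> teq (deltan n x) [::].

Definition omega (l : seq H) : H :=
  if l is x :: l' then foldl mul x l' else 0.

Fixpoint omega_r (l : seq H) : H :=
  match l with
  | [::] => 0
  | [:: x] => x
  | x :: l' => mul x (omega_r l')
  end.

Definition e_trunc (N : nat) (x : H) : H :=
  x + \sum_(1 <= n < N) (-1) ^+ n *: tens_eval omega (deltan n x).

(* a level beyond which delta^n x vanishes (exists by connectedness) *)
Definition level (x : H) : nat :=
  epsilon (inhabits 0%N) (fun N => forall n, (N <= n)%N -> teq (deltan n x) [::]).

Definition e (x : H) : H := e_trunc (level x) x.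

End AsMag.

(* Main.v *)
Require Import Defs.
From HB Require Import structures.
From mathcomp Require Import all_boot all_order all_algebra ssrAC.
From Stdlib Require Import ClassicalEpsilon.
Set Implicit Arguments. Unset Strict Implicit. Unset Printing Implicit Defensive.
Import GRing.Theory.
Local Open Scope ring_scope.

Section Dev.
Variables (K : fieldType) (H : lmodType K) (mul : H -> H -> H) (one : H)
  (eps : H -> K) (Delta : H -> seq (H * H)).

Hypothesis mulDl : forall a x y z, mul (a *: x + y) z = a *: mul x z + mul y z.
Hypothesis mulDr : forall a x y z, mul z (a *: x + y) = a *: mul z x + mul z y.
Hypothesis mul1 : forall x, mul one x = x /\ mul x one = x.
Hypothesis DeltaL : forall a x y, teq (tens2 (Delta (a *: x + y)))
                         (tscale a (tens2 (Delta x)) ++ tens2 (Delta y)).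
Hypothesis coass : forall x, teq [seq (1, [:: q.1; q.2; p.2]) | p <- Delta x, q <- Delta p.1]
                     [seq (1, [:: p.1; q.1; q.2]) | p <- Delta x, q <- Delta p.2].
Hypothesis Delta1 : teq (tens2 (Delta one)) (tens2 [:: (one, one)]).
Hypothesis DeltaM : forall x y, teq (tens2 (Delta (mul x y)))
         ([seq (1, [:: mul p.1 one; mul p.2 y]) | p <- Delta x] ++
          [seq (1, [:: mul x p.1; mul one p.2]) | p <- Delta y] ++
          [:: (-1, [:: x; y])]).

Definition linm (W W' : lmodType K) (L : W -> W') :=
  forall a u v, L (a *: u + v) = a *: L u + L v.

Section LinM.
Variables (W W' : lmodType K) (L : W -> W') (hL : linm L).
Lemma linm0 : L 0 = 0.
Proof. have := hL (-1) 0 0. by rewrite scaler0 addr0 scaleN1r addNr. Qed.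
Lemma linmD u v : L (u + v) = L u + L v.
Proof. by have := hL 1 u v; rewrite !scale1r. Qed.
Lemma linmZ a u : L (a *: u) = a *: L u.
Proof. by rewrite -[a *: u]addr0 hL linm0 addr0. Qed.
Lemma linmN u : L (- u) = - L u.
Proof. by rewrite -scaleN1r linmZ scaleN1r. Qed.
Lemma linmB u v : L (u - v) = L u - L v.
Proof. by rewrite linmD linmN. Qed.
Lemma linm_sum (I : Type) (r : seq I) (G : I -> W) :
  L (\sum_(i <- r) G i) = \sum_(i <- r) L (G i).
Proof.
elim: r => [|i r IH]; first by rewrite !big_nil linm0.
by rewrite !big_cons linmD IH.
Qed.
End LinM.

Definition bilin (W : lmodType K) (F : H -> H -> W) :=
  (forall a x y z, F (a *: x + y) z = a *: F x z + F y z) /\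
  (forall a x y z, F z (a *: x + y) = a *: F z x + F z y).

Definition trilin (W : lmodType K) (G : H -> H -> H -> W) :=
  [/\ (forall a x y z t, G (a *: x + y) z t = a *: G x z t + G y z t),
      (forall a x y z t, G z (a *: x + y) t = a *: G z x t + G z y t) &
      (forall a x y z t, G z t (a *: x + y) = a *: G z t x + G z t y)].

Definition sz2 (W : lmodType K) (F : H -> H -> W) (l : seq H) : W :=
  if l is [:: u; v] then F u v else 0.
Definition sz3 (W : lmodType K) (G : H -> H -> H -> W) (l : seq H) : W :=
  if l is [:: u; v; w] then G u v w else 0.

Lemma mlin_sz2 (W : lmodType K) (F : H -> H -> W) : bilin F -> multilinear (sz2 F).
Proof.
move=> [h1 h2] l1 l2 a x y.
case: l1 => [|u [|v [|w l1]]]; case: l2 => [|w' [|w'' l2]] /=;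
  rewrite ?scaler0 ?addr0 //.
Qed.

Lemma mlin_sz3 (W : lmodType K) (G : H -> H -> H -> W) : trilin G -> multilinear (sz3 G).
Proof.
move=> [h1 h2 h3] l1 l2 a x y.
case: l1 => [|u [|v [|w [|w0 l1]]]]; case: l2 => [|w' [|w'' [|w3 l2]]] /=;
  rewrite ?scaler0 ?addr0 //.
Qed.

Lemma mlin_ps (W : lmodType K) (f : seq H -> W) pre suf :
  multilinear f -> multilinear (fun l => f (pre ++ l ++ suf)).
Proof.
move=> hf l1 l2 a x y.
by rewrite -!catA /= !catA hf.
Qed.

Lemma bilin_of_mlin (W : lmodType K) (f : seq H -> W) pre suf :
  multilinear f -> bilin (fun u v => f (pre ++ u :: v :: suf)).
Proof.
move=> hf; split=> a x y z.
- exact: hf.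
- by rewrite -[pre ++ z :: _]/(pre ++ [:: z] ++ _) catA hf -!catA.
Qed.

Lemma te_nil (W : lmodType K) (f : seq H -> W) : tens_eval f [::] = 0.
Proof. by rewrite /tens_eval big_nil. Qed.
Lemma te_cat (W : lmodType K) (f : seq H -> W) s t :
  tens_eval f (s ++ t) = tens_eval f s + tens_eval f t.
Proof. by rewrite /tens_eval big_cat. Qed.
Lemma te_tscale (W : lmodType K) (f : seq H -> W) a s :
  tens_eval f (tscale a s) = a *: tens_eval f s.
Proof.
rewrite /tens_eval /tscale big_map scaler_sumr.
by apply: eq_bigr => p _; rewrite scalerA.
Qed.
Lemma te_tens2 (W : lmodType K) (f : seq H -> W) s :
  tens_eval f (tens2 s) = \sum_(p <- s) f [:: p.1; p.2].
Proof. by rewrite /tens_eval /tens2 big_map; apply: eq_bigr => p _; rewrite scale1r. Qed.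

Definition D2 (W : lmodType K) (F : H -> H -> W) (y : H) : W :=
  \sum_(p <- Delta y) F p.1 p.2 - F y one - F one y.

Lemma deltaD2 (W : lmodType K) (f : seq H -> W) y :
  tens_eval f (delta one Delta y) = D2 (fun u v => f [:: u; v]) y.
Proof.
rewrite /delta te_cat te_tens2 /tens_eval !big_cons big_nil /D2 !scaleN1r addr0.
by rewrite addrA.
Qed.

Lemma te_sz2 (W : lmodType K) (F : H -> H -> W) s :
  tens_eval (sz2 F) (tens2 s) = \sum_(p <- s) F p.1 p.2.
Proof. exact: te_tens2. Qed.

Lemma D2_lin (W : lmodType K) (F : H -> H -> W) : bilin F -> linm (D2 F).
Proof.
move=> hF a x y; have [h1 h2] := hF.
have hT := DeltaL a x y (mlin_sz2 hF).
rewrite te_cat te_tscale !te_sz2 in hT.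
rewrite /D2 hT h1 h2 !scalerBr !opprD !addrA.
by rewrite (ACl (1*3*5*2*4*6)).
Qed.

Lemma D2_ext (W : lmodType K) (F G : H -> H -> W) y :
  (forall a b, F a b = G a b) -> D2 F y = D2 G y.
Proof. by move=> h; rewrite /D2 !h; congr (_ - _ - _); apply: eq_bigr => p _. Qed.

Lemma D2_add (W : lmodType K) (F G : H -> H -> W) y :
  D2 (fun a b => F a b + G a b) y = D2 F y + D2 G y.
Proof.
rewrite /D2 big_split /= !opprD !addrA.
by rewrite (ACl (1*3*5*2*4*6)).
Qed.

Lemma D2_scale (W : lmodType K) (F : H -> H -> W) c y :
  D2 (fun a b => c *: F a b) y = c *: D2 F y.
Proof. by rewrite /D2 -scaler_sumr !scalerBr. Qed.

Lemma D2_opp (W : lmodType K) (F : H -> H -> W) y :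
  D2 (fun a b => - F a b) y = - D2 F y.
Proof.
rewrite -scaleN1r -D2_scale; apply: D2_ext => a b; by rewrite scaleN1r.
Qed.

Lemma D2_zero (W : lmodType K) y : D2 (fun _ _ => (0 : W)) y = 0.
Proof. by rewrite /D2 big1 // !subr0. Qed.

Lemma D2_sum (W : lmodType K) (I : Type) (r : seq I) (G : I -> H -> H -> W) y :
  D2 (fun a b => \sum_(i <- r) G i a b) y = \sum_(i <- r) D2 (G i) y.
Proof.
elim: r => [|i r IH].
  rewrite big_nil -[RHS](D2_zero W y); apply: D2_ext => a b; by rewrite big_nil.
rewrite big_cons -IH -D2_add; apply: D2_ext => a b; by rewrite big_cons.
Qed.

Lemma linm_D2 (W W' : lmodType K) (L : W -> W') (F : H -> H -> W) y :
  linm L -> L (D2 F y) = D2 (fun a b => L (F a b)) y.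
Proof. by move=> hL; rewrite /D2 !(linmB hL) (linm_sum hL). Qed.

Lemma prim_D2 (W : lmodType K) (F : H -> H -> W) x :
  Prim one eps Delta x -> bilin F -> D2 F x = 0.
Proof.
move=> [_ hx] hF; have := hx _ _ (mlin_sz2 hF).
rewrite deltaD2 te_nil => h; exact: h.
Qed.

Lemma Delta1_eval (W : lmodType K) (F : H -> H -> W) :
  bilin F -> \sum_(p <- Delta one) F p.1 p.2 = F one one.
Proof.
move=> hF; have := Delta1 (mlin_sz2 hF).
by rewrite !te_sz2 big_cons big_nil addr0.
Qed.

Lemma sumB3 (W : lmodType K) (I : Type) (r : seq I) (F1 F2 F3 : I -> W) :
  \sum_(i <- r) (F1 i - F2 i - F3 i) = \sum_(i <- r) F1 i - \sum_(i <- r) F2 i - \sum_(i <- r) F3 i.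
Proof. by rewrite !big_split /= !sumrN. Qed.

Lemma Der (W : lmodType K) (F : H -> H -> W) x y : bilin F ->
  D2 F (mul x y) = D2 (fun a b => F a (mul b y)) x + D2 (fun a b => F (mul x a) b) y + F x y.
Proof.
move=> hF; have hT := DeltaM x y (mlin_sz2 hF).
rewrite te_sz2 !te_cat in hT.
have e1 : tens_eval (sz2 F) [seq (1, [:: mul p.1 one; mul p.2 y]) | p <- Delta x]
     = \sum_(p <- Delta x) F p.1 (mul p.2 y).
  by rewrite /tens_eval big_map; apply: eq_bigr => p _ /=; rewrite scale1r (proj2 (mul1 _)).
have e2 : tens_eval (sz2 F) [seq (1, [:: mul x p.1; mul one p.2]) | p <- Delta y]
     = \sum_(p <- Delta y) F (mul x p.1) p.2.
  by rewrite /tens_eval big_map; apply: eq_bigr => p _ /=; rewrite scale1r (proj1 (mul1 _)).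
have e3 : tens_eval (sz2 F) [:: (-1, [:: x; y])] = - F x y.
  by rewrite /tens_eval big_cons big_nil addr0 /= scaleN1r.
rewrite /D2 hT e1 e2 e3 /= (proj1 (mul1 y)) (proj2 (mul1 x)).
rewrite !addrA subrK.
by rewrite (ACl (1*3*5*2*4)).
Qed.

Lemma Z2 (V : zmodType) (A P Q R g1 g2 g3 : V) :
  (A - P - Q) - (R - g1 - g2) - (g3 - g3 - g3) = (A - R - P) - (g1 - g1 - g1) - (Q - g2 - g3).
Proof.
rewrite !subrr !sub0r !opprK !opprB !addrA.
by rewrite (ACl (1*6*2*5*7*4*3)).
Qed.

Lemma coassD2 (W : lmodType K) (G : H -> H -> H -> W) x : trilin G ->
  D2 (fun a b => D2 (fun c d => G c d b) a) x = D2 (fun a b => D2 (fun c d => G a c d) b) x.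
Proof.
move=> hG; have [g1 g2 g3] := hG.
have hT := coass x (mlin_sz3 hG).
have hA : \sum_(p <- Delta x) \sum_(q <- Delta p.1) G q.1 q.2 p.2 =
          \sum_(p <- Delta x) \sum_(q <- Delta p.2) G p.1 q.1 q.2.
  transitivity (tens_eval (sz3 G) [seq (1, [:: q.1; q.2; p.2]) | p <- Delta x, q <- Delta p.1]).
    by rewrite /tens_eval big_allpairs_dep; apply: eq_bigr => p _; apply: eq_bigr => q _ /=; rewrite scale1r.
  rewrite hT.
  by rewrite /tens_eval big_allpairs_dep; apply: eq_bigr => p _; apply: eq_bigr => q _ /=; rewrite scale1r.
have b1 : bilin (fun c d => G c d x) by split => *; [apply: g1 | apply: g2].
have b2 : bilin (fun c d => G x c d) by split => *; [apply: g2 | apply: g3].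
rewrite /D2 /= !sumB3 hA (Delta1_eval b1) (Delta1_eval b2).
exact: Z2.
Qed.

Lemma Z3 (V : zmodType) (F0 A Z B : V) :
  F0 - (- A + (F0 + - (Z + B)) + Z) = A + B.
Proof.
rewrite !opprD !opprK !addrA.
by rewrite (ACl ((1*3)*(4*6)*(2*5))) /= !subrr !add0r.
Qed.

Definition Dop (W : lmodType K) (g : seq H -> W) (l : seq H) : W :=
  D2 (fun u v => g (u :: v :: behead l)) (head 0 l).

Lemma evalA (W : lmodType K) (f : seq H -> W) s :
  tens_eval f (delta_first one Delta s) = tens_eval (Dop f) s.
Proof.
rewrite /delta_first /tens_eval big_flatten big_map; apply: eq_bigr => p _.
rewrite big_map /Dop.
have := deltaD2 (fun l' => f (l' ++ behead p.2)) (head 0 p.2); rewrite /= => <-.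
rewrite /tens_eval scaler_sumr; apply: eq_bigr => q _; by rewrite scalerA.
Qed.

Lemma deltan_eval (W : lmodType K) (f : seq H -> W) n x :
  tens_eval f (deltan one Delta n x) = iter n (@Dop W) f [:: x].
Proof.
elim: n f => [|n IH] f /=.
  by rewrite /tens_eval big_cons big_nil scale1r addr0.
by rewrite evalA IH -iterSr.
Qed.

Lemma Dop_mlin (W : lmodType K) (g : seq H -> W) : multilinear g -> multilinear (Dop g).
Proof.
move=> hg [|w l1] l2 a x y /=.
  rewrite /Dop /=; exact: (D2_lin (bilin_of_mlin [::] l2 hg)).
rewrite /Dop /= -D2_scale -D2_add; apply: D2_ext => u v.
exact: (hg (u :: v :: l1)).
Qed.

Lemma iter_mlin (W : lmodType K) n (g : seq H -> W) :
  multilinear g -> multilinear (iter n (@Dop W) g).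
Proof. by move=> hg; elim: n => [|n IH] //=; apply: Dop_mlin. Qed.

Lemma iter_ext_all (W : lmodType K) n (g1 g2 : seq H -> W) l :
  (forall l, g1 l = g2 l) -> iter n (@Dop W) g1 l = iter n (@Dop W) g2 l.
Proof.
move=> h; elim: n l => [|n IH] l /=; first exact: h.
rewrite /Dop; apply: D2_ext => u v; exact: IH.
Qed.

Lemma iter_ext (W : lmodType K) n (g1 g2 : seq H -> W) l0 : l0 != [::] ->
  (forall l, size l = (n + size l0)%N -> g1 l = g2 l) ->
  iter n (@Dop W) g1 l0 = iter n (@Dop W) g2 l0.
Proof.
elim: n l0 => [|n IH] l0 hl0 h /=; first by apply: h.
rewrite /Dop; apply: D2_ext => u v; apply: IH => // l hl; apply: h.
case: l0 hl0 hl => //= w l0 _ ->; by rewrite !addnS !addSn.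
Qed.

Lemma Dop_lin_fun (W : lmodType K) n (g1 g2 : seq H -> W) c l :
  iter n (@Dop W) (fun l => c *: g1 l + g2 l) l = c *: iter n (@Dop W) g1 l + iter n (@Dop W) g2 l.
Proof.
elim: n l => [|n IH] l //=.
rewrite /Dop -D2_scale -D2_add; apply: D2_ext => u v; exact: IH.
Qed.

Lemma Dop_zero (W : lmodType K) n l : iter n (@Dop W) (fun _ => 0) l = 0.
Proof.
elim: n l => [|n IH] l //=.
rewrite /Dop -[RHS](D2_zero W (head 0 l)); apply: D2_ext => u v; exact: IH.
Qed.

Lemma Dop_sum (W : lmodType K) n (I : Type) (r : seq I) (G : I -> seq H -> W) l :
  iter n (@Dop W) (fun l => \sum_(i <- r) G i l) l = \sum_(i <- r) iter n (@Dop W) (G i) l.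
Proof.
elim: r => [|i r IH].
  rewrite big_nil -[RHS](Dop_zero W n l); apply: iter_ext_all => l'; by rewrite big_nil.
rewrite big_cons -IH -[iter n _ (G i) l]scale1r -Dop_lin_fun.
apply: iter_ext_all => l'; by rewrite big_cons scale1r.
Qed.

Lemma Dop_comp (W W' : lmodType K) (L : W -> W') n (g : seq H -> W) l : linm L ->
  iter n (@Dop W') (fun l => L (g l)) l = L (iter n (@Dop W) g l).
Proof.
move=> hL; elim: n l => [|n IH] l //=.
rewrite /Dop (linm_D2 _ _ hL); apply: D2_ext => u v; by rewrite IH.
Qed.

Lemma Dop_suffix (W : lmodType K) n (g : seq H -> W) a r :
  iter n (@Dop W) g (a :: r) = iter n (@Dop W) (fun l => g (l ++ r)) [:: a].
Proof.
elim: n g a r => [|n IH] g a r //=.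
rewrite /Dop /=; apply: D2_ext => u v.
rewrite (IH g u (v :: r)) (IH _ u [:: v]).
apply: iter_ext_all => l /=; by rewrite -catA.
Qed.

Lemma Dop_R1 (W : lmodType K) n (g : seq H -> W) x :
  iter n.+1 (@Dop W) g [:: x] = D2 (fun a b => iter n (@Dop W) g [:: a; b]) x.
Proof. by []. Qed.

Lemma teq_iter (W : lmodType K) n (g : seq H -> W) x :
  teq (deltan one Delta n x) [::] -> multilinear g -> iter n (@Dop W) g [:: x] = 0.
Proof. by move=> h hg; rewrite -deltan_eval h // te_nil. Qed.

Lemma foldl_lin l : forall a u v, foldl mul (a *: u + v) l = a *: foldl mul u l + foldl mul v l.
Proof. elim: l => [|w l IH] a u v //=; by rewrite mulDl IH. Qed.

Lemma omega_mlin : multilinear (omega mul).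
Proof.
move=> [|w l1] l2 a x y /=; first exact: foldl_lin.
by rewrite !foldl_cat /= mulDr foldl_lin.
Qed.

Lemma omega_rcons l b : l != [::] -> omega mul (l ++ [:: b]) = mul (omega mul l) b.
Proof. case: l => // w l _ /=; by rewrite foldl_cat. Qed.

Lemma linm_mulr b : linm (fun v => mul v b).
Proof. by move=> *; apply: mulDl. Qed.

Lemma iter_omega2 n a b :
  iter n (@Dop H) (omega mul) [:: a; b] = mul (iter n (@Dop H) (omega mul) [:: a]) b.
Proof.
rewrite (Dop_suffix n (omega mul) a [:: b]).
rewrite (@iter_ext H n _ (fun l => mul (omega mul l) b)) //.
  exact: (@Dop_comp H H (fun v => mul v b) n (omega mul) [:: a] (linm_mulr b)).
move=> l hl; apply: omega_rcons; apply/eqP => l0; move: hl; by rewrite l0 /= addn1.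
Qed.

Definition E N x := \sum_(n < N) (-1) ^+ n *: iter n (@Dop H) (omega mul) [:: x].

Lemma E_lin N : linm (E N).
Proof.
move=> a x y; rewrite /E scaler_sumr -big_split; apply: eq_bigr => n _ /=.
have := iter_mlin n omega_mlin [::] [::] a x y; rewrite /= => ->.
by rewrite scalerDr !scalerA mulrC.
Qed.

Lemma E_rec N x : E N.+1 x = x - D2 (fun a b => mul (E N a) b) x.
Proof.
rewrite /E big_ord_recl /= expr0 scale1r; congr (_ + _).
rewrite (@D2_ext _ _ (fun a b => \sum_(i < N) (-1)^+i *: mul (iter i (@Dop H) (omega mul) [:: a]) b)); last first.
  move=> a b; rewrite (linm_sum (linm_mulr b)); apply: eq_bigr => i _; exact: (linmZ (linm_mulr b)).
rewrite D2_sum -sumrN; apply: eq_bigr => i _.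
rewrite D2_scale exprS mulN1r scaleNr; congr (- (_ *: _)).
rewrite add0n /Dop /=; apply: D2_ext => a b; exact: iter_omega2.
Qed.

Lemma mul0l z : mul 0 z = 0.
Proof. have := mulDl (-1) 0 0 z; by rewrite scaler0 addr0 scaleN1r addNr. Qed.

Lemma E_recr N x : E N.+1 x = E N x + (-1)^+N *: iter N (@Dop H) (omega mul) [:: x].
Proof. by rewrite /E big_ord_recr. Qed.

Definition S N x (W : lmodType K) (F : H -> H -> W) :=
  \sum_(1 <= k < N.+1)
     iter N (@Dop W) (fun l => F (omega mul (take k l)) (omega mul (drop k l))) [:: x].

Lemma split_mlin (W : lmodType K) (F : H -> H -> W) k : bilin F ->
  multilinear (fun l => F (omega mul (take k l)) (omega mul (drop k l))).
Proof.
move=> [h1 h2] l1 l2 a x y; rewrite !take_cat !drop_cat.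
case: ltnP => hk.
  by rewrite !omega_mlin h2.
case: (k - size l1)%N => [|j] /=.
  by rewrite !cats0 foldl_lin h2.
by rewrite !omega_mlin h1.
Qed.

Lemma S_succ N x (W : lmodType K) (F : H -> H -> W) : bilin F ->
  S N.+1 x F = D2 (fun a b => S N a (fun u v => F u (mul v b))) x
             + D2 (fun a b => F (iter N (@Dop H) (omega mul) [:: a]) b) x.
Proof.
move=> hF; rewrite /S big_nat_recr //; congr (_ + _).
  rewrite D2_sum; apply: eq_big_nat => k /andP[hk1 hk2].
  rewrite Dop_R1; apply: D2_ext => a b; rewrite Dop_suffix.
  apply: iter_ext => // l hl.
  have hs : (k < size l)%N by rewrite hl addn1.
  rewrite take_cat drop_cat hs omega_rcons //.
  by rewrite -size_eq0 size_drop subn_eq0 -ltnNge.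
rewrite Dop_R1; apply: D2_ext => a b; rewrite Dop_suffix.
have hL : linm (fun v => F v b) by move=> *; apply: hF.1.
rewrite (@iter_ext W N _ (fun l => F (omega mul l) b)) //.
  exact: (@Dop_comp H W (fun v => F v b) N (omega mul) [:: a] hL).
move=> l hl; by rewrite take_cat drop_cat hl addn1 ltnn subnn /= cats0.
Qed.

Lemma bilin_mulr (W : lmodType K) (F : H -> H -> W) b : bilin F ->
  bilin (fun u v => F u (mul v b)).
Proof. move=> [h1 h2]; split=> *; [exact: h1 | by rewrite mulDl h2]. Qed.

Lemma Z3' (V : lmodType K) (c : K) (F0 A Z B : V) :
  F0 - (- (c *: A) + (F0 + - (Z + c *: B)) + Z) = c *: (A + B).
Proof. by rewrite scalerDr Z3. Qed.

Lemma D2E N : forall x (W : lmodType K) (F : H -> H -> W), bilin F ->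
  D2 F (E N x) = - ((-1)^+N *: S N x F).
Proof.
elim: N => [|N IH] x W F hF.
  by rewrite /E big_ord0 /S big_geq // scaler0 oppr0 (linm0 (D2_lin hF)).
have hD := D2_lin hF.
rewrite E_rec (linmB hD) (linm_D2 _ _ hD).
rewrite (@D2_ext _ (fun a b => D2 F (mul (E N a) b)) (fun a b => D2 (fun u v => F u (mul v b)) (E N a)
     + D2 (fun u v => F (mul (E N a) u) v) b + F (E N a) b)); last first.
  by move=> a b; rewrite (Der _ _ hF).
rewrite (D2_add (fun a b => D2 (fun u v => F u (mul v b)) (E N a)
     + D2 (fun u v => F (mul (E N a) u) v) b) (fun a b => F (E N a) b)).
rewrite (D2_add (fun a b => D2 (fun u v => F u (mul v b)) (E N a))
                (fun a b => D2 (fun u v => F (mul (E N a) u) v) b)).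
have hco : D2 (fun a b => D2 (fun u v => F (mul (E N a) u) v) b) x
         = D2 (fun a b => F a b - F (E N.+1 a) b) x.
  rewrite -(@coassD2 W (fun a u v => F (mul (E N a) u) v)); last first.
    have [h1 h2] := hF; split=> *.
    - by rewrite (E_lin N) mulDl h1.
    - by rewrite mulDr h1.
    - exact: h2.
  apply: D2_ext => a b.
  have hL : linm (fun v => F v b) by move=> *; apply: hF.1.
  rewrite -(linm_D2 (fun c d => mul (E N c) d) a hL) /=.
  by rewrite E_rec -(linmB hL) subKr.
rewrite hco.
rewrite (@D2_ext _ (fun a b => D2 (fun u v => F u (mul v b)) (E N a)) (fun a b => - ((-1)^+N *: S N a (fun u v => F u (mul v b))))); last first.
  by move=> a b; apply: IH; apply: bilin_mulr.
have hL b : linm (fun v => F v b) by move=> *; apply: hF.1.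
rewrite (@D2_ext _ (fun a b => F a b - F (E N.+1 a) b)
    (fun a b => F a b + - (F (E N a) b + (-1)^+N *: F (iter N (@Dop H) (omega mul) [:: a]) b))); last first.
  by move=> a b; rewrite E_recr (linmD (hL b)) (linmZ (hL b)).
have e1 : D2 (fun a b => - ((-1)^+N *: S N a (fun u v => F u (mul v b)))) x
   = - ((-1)^+N *: D2 (fun a b => S N a (fun u v => F u (mul v b))) x).
  rewrite (D2_opp (fun a b => (-1)^+N *: S N a (fun u v => F u (mul v b)))).
  by rewrite (D2_scale (fun a b => S N a (fun u v => F u (mul v b)))).
have e2 : D2 (fun a b => F a b + - (F (E N a) b + (-1)^+N *: F (iter N (@Dop H) (omega mul) [:: a]) b)) x
   = D2 F x + - (D2 (fun a b => F (E N a) b) x + (-1)^+N *: D2 (fun a b => F (iter N (@Dop H) (omega mul) [:: a]) b) x).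
  rewrite (D2_add F (fun a b => - (F (E N a) b + (-1)^+N *: F (iter N (@Dop H) (omega mul) [:: a]) b))).
  rewrite (D2_opp (fun a b => F (E N a) b + (-1)^+N *: F (iter N (@Dop H) (omega mul) [:: a]) b)).
  rewrite (D2_add (fun a b => F (E N a) b) (fun a b => (-1)^+N *: F (iter N (@Dop H) (omega mul) [:: a]) b)).
  by rewrite (D2_scale (fun a b => F (iter N (@Dop H) (omega mul) [:: a]) b)).
rewrite e1 e2 (S_succ N x hF).
rewrite exprS mulN1r scaleNr opprK.
exact: Z3'.
Qed.


Lemma omega_r_cons2 x y ys : omega_r mul [:: x, y & ys] = mul x (omega_r mul (y :: ys)).
Proof. by []. Qed.

Lemma omega_r_D2 xs : xs != [::] -> (forall z, z \in xs -> Prim one eps Delta z) ->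
  forall (W : lmodType K) (F : H -> H -> W), bilin F ->
  D2 F (omega_r mul xs) =
  \sum_(1 <= k < size xs) F (omega_r mul (take k xs)) (omega_r mul (drop k xs)).
Proof.
elim: xs => [|x ys IH] // _ hp W F hF.
case: ys IH hp => [|y ys] IH hp.
  by rewrite /= big_geq // (prim_D2 (hp x (mem_head _ _)) hF).
rewrite omega_r_cons2 (Der _ _ hF).
have hb1 : bilin (fun a b => F a (mul b (omega_r mul (y :: ys)))) by apply: bilin_mulr.
rewrite (prim_D2 (hp x (mem_head _ _)) hb1) add0r.
have hb2 : bilin (fun a b => F (mul x a) b).
  have [h1 h2] := hF; split=> *; [by rewrite mulDr h1 | exact: h2].
rewrite (IH _ _ _ _ hb2) //; last by move=> z hz; apply: hp; rewrite in_cons hz orbT.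
rewrite [in RHS]big_nat_recl // addrC; congr (_ + _).
apply: eq_big_nat => k /andP[hk1 hk2].
by case: k hk1 hk2 => [|k] //.
Qed.

Lemma vanish m : forall xs n (W : lmodType K) (g : seq H -> W),
  (size xs <= m)%N -> xs != [::] -> (forall z, z \in xs -> Prim one eps Delta z) ->
  (size xs <= n)%N -> multilinear g -> iter n (@Dop W) g [:: omega_r mul xs] = 0.
Proof.
elim: m => [|m IH] xs n W g hs hne hp hn hg; first by case: xs hs hne hp hn.
case: n hn => [|n] hn; first by case: xs hs hne hp hn.
have hb : bilin (fun a b => iter n (@Dop W) g [:: a; b]) := bilin_of_mlin [::] [::] (iter_mlin n hg).
rewrite Dop_R1 (omega_r_D2 hne hp hb).
apply: big1_seq => k /andP[_]; rewrite mem_index_iota => /andP[hk1 hk2].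
have hsz : size (take k xs) = k := size_takel (ltnW hk2).
rewrite Dop_suffix; apply: IH.
- by rewrite hsz -ltnS (leq_trans hk2 hs).
- by rewrite -size_eq0 hsz -lt0n.
- by move=> z hz; apply: hp; apply: mem_take hz.
- by rewrite hsz -ltnS (leq_trans hk2 hn).
- exact: (mlin_ps [::] [:: _] hg).
Qed.

Lemma Evalue m : forall xs N,
  (size xs <= m)%N -> xs != [::] -> (forall z, z \in xs -> Prim one eps Delta z) ->
  (size xs <= N)%N -> E N (omega_r mul xs) = if size xs == 1%N then omega_r mul xs else 0.
Proof.
elim: m => [|m IH] xs N hs hne hp hN; first by case: xs hs hne hp hN.
case: N hN => [|N] hN; first by case: xs hs hne hp hN.
have hb : bilin (fun a b => mul (E N a) b).
  split=> *; [by rewrite (E_lin N) mulDl | exact: mulDr].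
rewrite E_rec (omega_r_D2 hne hp hb).
case: xs hs hne hp hN => [|x [|y ys]] // hs _ hp hN.
  by rewrite big_geq // subr0.
have hs' : ((size ys).+2 <= m.+1)%N by [].
have hN' : ((size ys).+2 <= N.+1)%N by [].
rewrite [in LHS]big_nat_recl //.
have e1 : E N (omega_r mul (take 1 [:: x, y & ys])) = x.
  transitivity (if size [:: x] == 1%N then omega_r mul [:: x] else 0); last by [].
  apply: IH => //=.
  - by move: hs'; rewrite !ltnS; apply: leq_trans.
  - by move=> z; rewrite inE => /eqP ->; apply: hp; rewrite mem_head.
  - by move: hN'; rewrite !ltnS; apply: leq_trans.
rewrite e1 big1_seq; last first.
  move=> k /andP[_]; rewrite mem_index_iota => /andP[hk1 hk2].
  have hsz : size (take k.+1 [:: x, y & ys]) = k.+1 by rewrite size_takel //= ltnS ltnW.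
  rewrite (IH _ N) ?hsz.
  - by case: k hk1 {hk2 hsz} => [|k] //= _; rewrite mul0l.
  - exact: (leq_trans hk2 hs').
  - by rewrite -size_eq0 hsz.
  - by move=> z hz; apply: hp; apply: mem_take hz.
  - exact: (leq_trans hk2 hN').
rewrite addr0.
have -> : omega_r mul (drop 1 [:: x, y & ys]) = omega_r mul (y :: ys) by [].
by rewrite omega_r_cons2 subrr.
Qed.

Lemma etrunc_E N x : e_trunc mul one Delta N x = E (maxn N 1) x.
Proof.
case: N => [|N].
  rewrite /e_trunc big_geq // addr0 /E; have -> : maxn 0 1 = 1%N by [].
  by rewrite big_ord1 /= expr0 scale1r.
rewrite (maxn_idPl (ltn0Sn N)) /e_trunc /E big_ord_recl /= expr0 scale1r; congr (_ + _).
rewrite big_add1 /= big_mkord; apply: eq_bigr => i _.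
by rewrite -[delta_first _ _ _]/(deltan one Delta i.+1 x) deltan_eval /bump leq0n add1n add0n.
Qed.

Lemma E_stable x L : (forall n, (L <= n)%N -> teq (deltan one Delta n x) [::]) ->
  forall M, (L <= M)%N -> E M x = E L x.
Proof.
move=> hv; elim=> [|M IH] hM; first by move: hM; rewrite leqn0 => /eqP ->.
move: hM; rewrite leq_eqVlt => /orP[/eqP -> //|hM].
rewrite E_recr (teq_iter (hv M hM) omega_mlin) scaler0 addr0; exact: IH.
Qed.

Lemma level_ok x : (exists N, forall n, (N <= n)%N -> teq (deltan one Delta n x) [::]) ->
  forall n, (level one Delta x <= n)%N -> teq (deltan one Delta n x) [::].
Proof. move=> hex; rewrite /level; exact: (epsilon_spec (inhabits 0%N) _ hex). Qed.

Lemma part3 x : Prim one eps Delta x -> e mul one Delta x = x.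
Proof.
move=> hp; rewrite /e /e_trunc big_nat_cond big1 ?addr0 // => n /andP[/andP[hn _] _].
case: n hn => // n _; rewrite deltan_eval Dop_R1.
have hb : bilin (fun a b => iter n (@Dop H) (omega mul) [:: a; b]) :=
  bilin_of_mlin [::] [::] (iter_mlin n omega_mlin).
by rewrite (prim_D2 hp hb) scaler0.
Qed.

Lemma part2 (hC : connected one eps Delta) x :
  barH eps x -> teq (delta one Delta (e mul one Delta x)) [::].
Proof.
move=> hx W f hf; rewrite te_nil deltaD2.
have hF : bilin (fun u v => f [:: u; v]) := bilin_of_mlin [::] [::] hf.
have hv := level_ok (hC x hx).
rewrite /e etrunc_E D2E; last by [].
rewrite /S big1_seq ?scaler0 ?oppr0 // => k _.
apply: teq_iter; [apply: hv; exact: leq_maxl | exact: (split_mlin k hF)].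
Qed.

Lemma part1 xs : (2 <= size xs)%N -> (forall x, x \in xs -> Prim one eps Delta x) ->
  e mul one Delta (omega_r mul xs) = 0.
Proof.
move=> h2 hp; have hne : xs != [::] by case: xs h2 hp.
have hex : exists N, forall n, (N <= n)%N -> teq (deltan one Delta n (omega_r mul xs)) [::].
  exists (size xs) => n hn W g hg; rewrite deltan_eval te_nil.
  exact: (@vanish (size xs) xs n W g (leqnn _) hne hp hn hg).
have hv := level_ok hex.
rewrite /e etrunc_E (E_stable hv (leq_maxl _ 1)) -(E_stable hv (leq_maxl _ (size xs))).
rewrite (@Evalue (size xs) xs _ (leqnn _) hne hp (leq_maxr _ _)).
by rewrite (gtn_eqF h2).
Qed.

Lemma main_all (hC : connected one eps Delta) :
  [/\ (forall xs : seq H, (2 <= size xs)%N ->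
          (forall x, x \in xs -> Prim one eps Delta x) ->
          e mul one Delta (omega_r mul xs) = 0),
      (forall x, barH eps x -> teq (delta one Delta (e mul one Delta x)) [::]) &
      (forall x, Prim one eps Delta x -> e mul one Delta x = x)].
Proof.
split; [exact: part1 | exact: part2 | exact: part3].
Qed.

End Dev.

Theorem lemma4p2 (K : fieldType) (H : lmodType K) (mul : H -> H -> H) (one : H)
  (eps : H -> K) (Delta : H -> seq (H * H))
  (hB : is_AsMag_bialgebra mul one eps Delta)
  (hC : connected one eps Delta) :
  [/\ (forall xs : seq H, (2 <= size xs)%N ->
          (forall x, x \in xs -> Prim one eps Delta x) ->
          e mul one Delta (omega_r mul xs) = 0),
      (forall x, barH eps x -> teq (delta one Delta (e mul one Delta x)) [::]) &
      (forall x, Prim one eps Delta x -> e mul one Delta x = x)].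
Proof.
move: (hB) => [mDl [mDr [m1 [_ [DL [cA [_ [D1 DM]]]]]]]].
by apply: main_all.
Qed.
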